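(* Let $\Phi:(\mathcal{S},g)\to(\mathcal{M},\bar g)$ be an isometric immersion of an $n$-dimensional orientable Riemannian manifold into a semi-Riemannian manifold with co-dimension $k$, and assume that $\dim\mathrm{Im}\,\widetilde h_p$ is constant on $\mathcal{S}$, so that the umbilical space $\mathscr{U}$ of $\mathcal{S}$ is well defined. Let $0\le m\le k$. Then $\dim\mathscr{U}=m$ if and only if the total shear tensor satisfies $\bigwedge^{k-m+1}\widetilde h^\flat=0$ and $\bigwedge^{k-m}\widetilde h^\flat\neq0$.
   Context: $g=\Phi^\star\bar g$ is positive definite. $h$ is the second fundamental form, $A_\xi$ the shape operator of a normal $\xi$ ($g(A_\xi X,Y)=\bar g(h(X,Y),\xi)$), $H=\frac1n\mathrm{tr}_gh$, and $\widetilde h(X,Y)=h(X,Y)-g(X,Y)H$ is the total shear tensor. The shear space at $p$ is $\mathrm{Im}\,\widetilde h_p=\mathrm{span}\{\widetilde h(v,w):v,w\in T_p\mathcal{S}\}$; the umbilical space at $p$ is $\mathscr{U}_p=\{\xi_p\in T_p\mathcal{S}^\perp:A_{\xi_p}\text{ proportional to the identity}\}$. Under constant dimension, the umbilical space of $\mathcal{S}$ is $\mathscr{U}=\{\xi\text{ normal vector field}:A_\xi\text{ proportional to identity}\}$, a module over functions on $\mathcal{S}$ of dimension $\dim\mathscr{U}_p$. For a vector $V$, $V^\flat=\bar g(V,\cdot)$; $\bigwedge^q\widetilde h^\flat$ denotes the map $(X_1,Y_1,\dots,X_q,Y_q)\mapsto\widetilde h(X_1,Y_1)^\flat\wedge\cdots\wedge\widetilde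 h(X_q,Y_q)^\flat$ for tangent vector fields $X_i,Y_i$. *)

(* Defs.v *)
From HB Require Import structures.
From mathcomp Require Import all_boot all_order all_algebra.
From mathcomp Require Import reals.
Set Implicit Arguments. Unset Strict Implicit. Unset Printing Implicit Defensive.
Import Order.TTheory GRing.Theory Num.Theory.
Local Open Scope ring_scope.

(* Pointwise (linear-algebraic) model of an isometric immersion
   Phi : (S^n, g) -> (M^{n+k}, gbar) at a point p:
   - ambient tangent vectors at Phi(p) are row vectors 'rV_(n+k),
     the ambient metric gbar_p has Gram matrix G (symmetric, nondegenerate);
   - tangent vectors of S at p are row vectors 'rV_n (coordinates in a basis),
     dPhi_p sends X to X *m dPhi;
   - the second fundamental form h_p is the symmetric bilinear map with
     values h(e_i, e_j) = hc i j in the normal space. *)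

Section Pointwise.
Variables (R : realType) (n k : nat).
Local Notation N := (n + k)%N.

Definition bform (G : 'M[R]_N) (u v : 'rV[R]_N) : R := (u *m G *m v^T) 0 0.

Definition gmx (G : 'M[R]_N) (dPhi : 'M[R]_(n, N)) : 'M[R]_n :=
  dPhi *m G *m dPhi^T.

Definition gind (G : 'M[R]_N) (dPhi : 'M[R]_(n, N)) (X Y : 'rV[R]_n) : R :=
  bform G (X *m dPhi) (Y *m dPhi).

Definition is_normal (G : 'M[R]_N) (dPhi : 'M[R]_(n, N)) (xi : 'rV[R]_N) :=
  forall X : 'rV[R]_n, bform G (X *m dPhi) xi = 0.

Definition sff (hc : 'I_n -> 'I_n -> 'rV[R]_N) (X Y : 'rV[R]_n) : 'rV[R]_N :=
  \sum_(i < n) \sum_(j < n) (X 0 i * Y 0 j) *: hc i j.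

Definition meancurv (G : 'M[R]_N) (dPhi : 'M[R]_(n, N))
    (hc : 'I_n -> 'I_n -> 'rV[R]_N) : 'rV[R]_N :=
  (n%:R)^-1 *: \sum_(i < n) \sum_(j < n) (invmx (gmx G dPhi)) i j *: hc i j.

Definition shear G dPhi hc (X Y : 'rV[R]_n) : 'rV[R]_N :=
  sff hc X Y - gind G dPhi X Y *: meancurv G dPhi hc.

(* shape operator A_xi, acting on row vectors X |-> X *m A_xi, characterised
   by g(A_xi X, Y) = gbar(h(X,Y), xi) *)
Definition shape G dPhi hc (xi : 'rV[R]_N) : 'M[R]_n :=
  (\matrix_(i, j) bform G (hc i j) xi) *m invmx (gmx G dPhi).

Definition umbilical G dPhi hc (xi : 'rV[R]_N) : Prop :=
  is_normal G dPhi xi /\ is_scalar_mx (shape G dPhi hc xi).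

Definition shear_set G dPhi hc (v : 'rV[R]_N) : Prop :=
  exists X Y, v = shear G dPhi hc X Y.

Definition span_dim (P : 'rV[R]_N -> Prop) (d : nat) : Prop :=
  exists B : 'M[R]_(d, N),
    [/\ row_free B, forall i, P (row i B) & forall v, P v -> (v <= B)%MS].

(* ( /\^q h~^flat )(X_1,Y_1,...,X_q,Y_q) evaluated on ambient vectors
   u_1..u_q :  det [ gbar(h~(X_i,Y_i), u_j) ]_{i,j} *)
Definition wedge_shear G dPhi hc (q : nat)
    (XY : 'I_q -> 'rV[R]_n * 'rV[R]_n) (u : 'I_q -> 'rV[R]_N) : R :=
  \det (\matrix_(i, j) bform G (shear G dPhi hc (XY i).1 (XY i).2) (u j)).

End Pointwise.

Section Global.
Variables (R : realType) (n k : nat) (S : Type).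
Variables (G : S -> 'M[R]_(n + k)) (dPhi : S -> 'M[R]_(n, n + k))
          (hc : S -> 'I_n -> 'I_n -> 'rV[R]_(n + k)).

Definition wedge_shear_zero (q : nat) : Prop :=
  forall p XY u, wedge_shear (G p) (dPhi p) (hc p) (q := q) XY u = 0.

Definition umb_dim (m : nat) : Prop :=
  forall p, span_dim (umbilical (G p) (dPhi p) (hc p)) m.

End Global.

(* Main.v *)
Require Import Defs.
From HB Require Import structures.
From mathcomp Require Import all_boot all_order all_algebra.
From mathcomp Require Import reals.
From mathcomp Require Import zify.
Set Implicit Arguments. Unset Strict Implicit. Unset Printing Implicit Defensive.
Import Order.TTheory GRing.Theory Num.Theory.
Local Open Scope ring_scope.

Lemma inj_free (F : fieldType) (m r : nat) (A : 'M[F]_(m, r)) :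
  (forall x : 'rV_m, x *m A = 0 -> x = 0) -> row_free A.
Proof.
move=> H; rewrite -kermx_eq0; apply/eqP/row_matrixP => i.
rewrite row0; apply: H; by rewrite -row_mul mulmx_ker row0.
Qed.

Lemma span_dimE (R : realType) n k (P : 'rV[R]_(n + k) -> Prop) r
    (K : 'M[R]_(r, n + k)) m :
  (forall v, P v <-> (v <= K)%MS) -> (span_dim P m <-> m = \rank K).
Proof.
move=> HP; split.
- move=> [Bm [Hf Hr Hs]].
  have h1 : (Bm <= K)%MS by apply/row_subP => i; apply/HP.
  have h2 : (K <= Bm)%MS by apply/row_subP => i; apply: Hs; apply/HP; exact: row_sub.
  move/eqP: Hf => <-; apply/eqP; rewrite eqn_leq !mxrankS //.
- move=> ->; exists (row_base K); split.
  + exact: row_base_free.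
  + by move=> i; apply/HP; rewrite (submx_trans (row_sub i _)) // eq_row_base.
  + by move=> v /HP; rewrite eq_row_base.
Qed.

Section Point.
Variables (R : realType) (n k : nat).
Local Notation N := (n + k)%N.
Variables (G : 'M[R]_N) (D : 'M[R]_(n, N)) (hc : 'I_n -> 'I_n -> 'rV[R]_N).
Hypothesis HGsym : G^T = G.
Hypothesis HGnd : G \in unitmx.
Hypothesis Hgpos : forall X : 'rV[R]_n, X != 0 -> 0 < gind G D X X.
Hypothesis Hhnor : forall i j, is_normal G D (hc i j).

Lemma bform_sum (I : Type) (r : seq I) (P : pred I) (F : I -> 'rV[R]_N) v :
  bform G (\sum_(i <- r | P i) F i) v = \sum_(i <- r | P i) bform G (F i) v.
Proof. by rewrite /bform !mulmx_suml summxE. Qed.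

Lemma bformZ a u v : bform G (a *: u) v = a * bform G u v.
Proof. rewrite /bform -!scalemxAl. rewrite mxE. done. Qed.

Lemma bformB u w v : bform G (u - w) v = bform G u v - bform G w v.
Proof. by rewrite /bform !mulmxBl !mxE. Qed.

Lemma bformC u v : bform G u v = bform G v u.
Proof.
rewrite /bform.
have -> : (u *m G *m v^T) 0 0 = ((u *m G *m v^T)^T) 0 0.
  by rewrite [in RHS]mxE.
by rewrite !trmx_mul trmxK HGsym mulmxA.
Qed.

Lemma bformE u v : bform G u v = (u *m (G *m v^T)) 0 0.
Proof. by rewrite /bform mulmxA. Qed.

Local Notation g := (gmx G D).
Local Notation T := (G *m D^T).

Lemma gsym : g^T = g.
Proof. by rewrite /gmx !trmx_mul trmxK HGsym mulmxA. Qed.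

Lemma gindE X Y : gind G D X Y = (X *m g *m Y^T) 0 0.
Proof. by rewrite /gind /bform /gmx trmx_mul !mulmxA. Qed.

Lemma g_unit : g \in unitmx.
Proof.
rewrite -row_free_unit; apply: inj_free => x Hx.
apply/eqP; apply: contraT => /Hgpos; by rewrite gindE Hx mul0mx mxE ltxx.
Qed.

Lemma normalE xi : is_normal G D xi <-> xi *m T = 0.
Proof.
split => [H|H X].
  have H1 : D *m G *m xi^T = 0.
    apply/matrixP => i j.
    have := H (delta_mx 0 i); rewrite /bform -rowE -!row_mul mxE => Hi.
    by rewrite [j]ord1 Hi mxE.
  by apply: trmx_inj; rewrite trmx0 !trmx_mul trmxK HGsym H1.
have H1 : D *m (G *m xi^T) = 0.
  by move: (congr1 trmx H); rewrite !trmx_mul trmxK HGsym trmx0 mulmxA.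
by rewrite /bform -!mulmxA H1 mulmx0 mxE.
Qed.


Local Notation Hm := (meancurv G D hc).
Definition sij i j := hc i j - g i j *: Hm.
Local Notation Bx xi := (\matrix_(i, j) bform G (hc i j) xi).

Lemma hcT i j : hc i j *m T = 0.
Proof. by apply/normalE. Qed.

Lemma HmT : Hm *m T = 0.
Proof.
rewrite /meancurv -scalemxAl mulmx_suml big1 ?scaler0 // => i _.
rewrite mulmx_suml big1 // => j _; by rewrite -scalemxAl hcT scaler0.
Qed.

Lemma sT i j : sij i j *m T = 0.
Proof. by rewrite /sij mulmxBl -scalemxAl hcT HmT scaler0 subr0. Qed.

Lemma gindS X Y : gind G D X Y = \sum_i \sum_j (X 0 i * Y 0 j) * g i j.
Proof.
rewrite gindE mxE [RHS]exchange_big /=; apply: eq_bigr => b _.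
rewrite !mxE mulr_suml; apply: eq_bigr => a _; by rewrite mulrAC.
Qed.

Lemma shear_sum X Y :
  shear G D hc X Y = \sum_i \sum_j (X 0 i * Y 0 j) *: sij i j.
Proof.
rewrite /shear /sff gindS.
have -> : \sum_i \sum_j (X 0 i * Y 0 j) *: sij i j =
   \sum_i \sum_j (X 0 i * Y 0 j) *: hc i j
   - \sum_i \sum_j ((X 0 i * Y 0 j) * g i j) *: Hm.
  rewrite -sumrB; apply: eq_bigr => i _; rewrite -sumrB; apply: eq_bigr => j _.
  by rewrite /sij scalerBr scalerA.
congr (_ - _); rewrite scaler_suml; apply: eq_bigr => i _.
by rewrite scaler_suml.
Qed.

Lemma delta_sum (F : 'I_n -> 'I_n -> 'rV[R]_N) i j :
  \sum_a \sum_b ((delta_mx 0 i : 'rV[R]_n) 0 a * (delta_mx 0 j : 'rV[R]_n) 0 b) *: F a b = F i j.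
Proof.
rewrite (bigD1 i) //= [X in _ + X]big1 => [|a]; last first.
  move=> /negbTE na.
  by apply: big1 => b _; rewrite !mxE na andbF mul0r scale0r.
rewrite addr0 (bigD1 j) //= [X in _ + X]big1 => [|b]; last first.
  move=> /negbTE nb.
  by rewrite !mxE nb andbF mulr0 scale0r.
by rewrite addr0 !mxE !eqxx /= mulr1 scale1r.
Qed.

Lemma s_shear i j : shear G D hc (delta_mx 0 i) (delta_mx 0 j) = sij i j.
Proof. by rewrite shear_sum delta_sum. Qed.

Lemma shearT X Y : shear G D hc X Y *m T = 0.
Proof.
rewrite shear_sum mulmx_suml big1 // => i _; rewrite mulmx_suml big1 // => j _.
by rewrite -scalemxAl sT scaler0.
Qed.

Lemma bform_s xi i j : bform G (sij i j) xi = Bx xi i j - g i j * bform G Hm xi.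
Proof. by rewrite /sij bformB bformZ mxE. Qed.

Lemma bform_H xi : bform G Hm xi =
  n%:R^-1 * \sum_i \sum_j invmx g i j * bform G (hc i j) xi.
Proof.
rewrite /meancurv bformZ bform_sum; congr (_ * _); apply: eq_bigr => i _.
rewrite bform_sum; apply: eq_bigr => j _; by rewrite bformZ.
Qed.

Lemma umbE xi : umbilical G D hc xi <->
  xi *m T = 0 /\ forall i j, bform G (sij i j) xi = 0.
Proof.
rewrite /umbilical /Defs.shape; split => [[/normalE Hn Hs]|[Hn Hs]]; split => //.
- move/is_scalar_mxP: Hs => [a Ha].
  have HB : Bx xi = a *: g by rewrite -mul_scalar_mx -Ha (mulmxKV g_unit).
  have HBij i j : bform G (hc i j) xi = a * g i j.
    by have := congr1 (fun M : 'M[R]_n => M i j) HB; rewrite !mxE.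
  move=> i j.
  have n0 : n%:R != 0 :> R.
    by rewrite pnatr_eq0 -lt0n (leq_ltn_trans (leq0n i) (ltn_ord i)).
  have Htr : \sum_i \sum_j invmx g i j * g i j = n%:R.
    rewrite -(mxtrace1 R n) -(mulVmx g_unit) /mxtrace; apply: eq_bigr => i' _.
    rewrite mxE; apply: eq_bigr => j' _; congr (_ * _).
    by rewrite -{1}gsym mxE.
  have Hc : bform G Hm xi = a.
    rewrite bform_H.
    transitivity (n%:R^-1 * (a * n%:R)).
      congr (_ * _); rewrite -Htr mulr_sumr; apply: eq_bigr => i' _.
      rewrite mulr_sumr; apply: eq_bigr => j' _; by rewrite HBij mulrCA.
    by rewrite mulrCA mulVf ?mulr1.
  by rewrite bform_s Hc HB mxE mulrC subrr.
- by apply/normalE.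
- have HB : Bx xi = bform G Hm xi *: g.
    apply/matrixP => i j; rewrite [RHS]mxE; apply/eqP; rewrite -subr_eq0 mulrC.
    by apply/eqP; rewrite -bform_s Hs.
  apply/is_scalar_mxP; exists (bform G Hm xi).
  by rewrite /Defs.shape HB -scalemxAl (mulmxV g_unit) scalemx1.
Qed.


Lemma rank_D : \rank D = n.
Proof.
apply/eqP; rewrite eqn_leq rank_leq_row /= -{1}(mxrank_unit g_unit) /gmx.
exact: leq_trans (mxrankM_maxl _ _) (mxrankM_maxl _ _).
Qed.

Variables (d : nat) (B : 'M[R]_(d, N)).
Hypothesis HBfree : row_free B.
Hypothesis HBrows : forall i, shear_set G D hc (row i B).
Hypothesis HBspan : forall v, shear_set G D hc v -> (v <= B)%MS.

Lemma BT : B *m T = 0.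
Proof.
apply/row_matrixP => i; rewrite row_mul row0.
by have [X [Y ->]] := HBrows i; rewrite shearT.
Qed.

Lemma entry_orth xi r : (xi *m (G *m B^T)) 0 r = bform G xi (row r B).
Proof.
by rewrite bformE tr_row colE !mulmxA -colE [RHS]mxE.
Qed.

Lemma orthE xi : (forall i j, bform G (sij i j) xi = 0) <-> xi *m (G *m B^T) = 0.
Proof.
split => [H|H i j].
  apply/matrixP => a r; rewrite [a]ord1 entry_orth [RHS]mxE bformC.
  have [X [Y ->]] := HBrows r.
  rewrite shear_sum bform_sum big1 // => i _; rewrite bform_sum big1 // => j _.
  by rewrite bformZ H mulr0.
have /submxP [w ->] : (sij i j <= B)%MS by apply: HBspan; exists (delta_mx 0 i), (delta_mx 0 j); rewrite s_shear.
rewrite bformC bformE trmx_mul !mulmxA.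
by move: H; rewrite !mulmxA => ->; rewrite !mul0mx mxE.
Qed.

Local Notation C := (col_mx D B).
Local Notation M := (G *m C^T).

Lemma umbME xi : umbilical G D hc xi <-> xi *m M = 0.
Proof.
rewrite umbE orthE tr_col_mx !mul_mx_row.
split => [[-> ->]|/eqP]; first by rewrite row_mx0.
by rewrite row_mx_eq0 => /andP[/eqP -> /eqP ->].
Qed.

Lemma cap0 : (D :&: B)%MS = 0.
Proof.
apply/eqP; rewrite -submx0; apply/row_subP => r.
have := row_sub r (D :&: B)%MS; rewrite sub_capmx => /andP[/submxP [x ->] /submxP [w Hw]].
have Hx : x *m g = 0.
  by rewrite /gmx !mulmxA -(mulmxA (x *m D)) Hw -mulmxA BT mulmx0.
have -> : x = 0 by rewrite -[x](mulmxK g_unit) Hx mul0mx.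
by rewrite mul0mx sub0mx.
Qed.

Lemma rank_C : \rank C = (n + d)%N.
Proof.
have := mxrank_sum_cap D B; rewrite cap0 mxrank0 addn0 addsmxE rank_D.
by move/eqP: HBfree => ->.
Qed.

Lemma d_le_k : (d <= k)%N.
Proof. by have := rank_leq_col C; rewrite rank_C leq_add2l. Qed.

Lemma rank_M : \rank M = (n + d)%N.
Proof.
by rewrite -mxrank_tr trmx_mul trmxK mxrankMfree ?rank_C // row_free_unit unitmx_tr.
Qed.


Lemma umb_span m : span_dim (umbilical G D hc) m <-> m = (k - d)%N.
Proof.
rewrite (span_dimE (K := kermx M)) => [|v]; last first.
  by rewrite umbME sub_kermx; exact: (rwP eqP).
by rewrite mxrank_ker rank_M subnDl.
Qed.

Lemma bform_mx q (S U : 'M[R]_(q, N)) :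
  \matrix_(i, j) bform G (row i S) (row j U) = S *m G *m U^T.
Proof.
apply/matrixP => i j; rewrite [LHS]mxE /bform -!row_mul tr_row colE mulmxA -colE.
by rewrite [LHS]mxE [LHS]mxE.
Qed.

Lemma wedge_iff q : (forall XY u, wedge_shear G D hc (q:=q) XY u = 0) <-> (d < q)%N.
Proof.
split => [Hall|Hdq XY u].
- rewrite ltnNge; apply/negP => Hqd.
  have : forall i : 'I_q, exists XY : 'rV[R]_n * 'rV[R]_n,
      row (widen_ord Hqd i) B = shear G D hc XY.1 XY.2.
    by move=> i; have [X [Y ->]] := HBrows (widen_ord Hqd i); exists (X, Y).
  case/fin_all_exists => XY HXY.
  set S := rowsub (widen_ord Hqd) B.
  have HS : \rank S = q.
    rewrite /S rowsubE mxrankMfree //.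
    have -> : rowsub (widen_ord Hqd) 1%:M = pid_mx q :> 'M[R]_(q, d).
      by apply/matrixP => i j; rewrite !mxE ltn_ord andbT.
    by rewrite rank_pid_mx.
  have HSG : row_full (S *m G)^T.
    by rewrite /row_full mxrank_tr mxrankMfree ?HS // row_free_unit.
  case/row_fullP: HSG => U HU.
  have := Hall XY (fun j => row j U).
  rewrite /wedge_shear.
  have -> : \matrix_(i, j) bform G (shear G D hc (XY i).1 (XY i).2) (row j U)
      = S *m G *m U^T.
    rewrite -bform_mx; apply/matrixP => i j; rewrite [LHS]mxE [RHS]mxE.
    by rewrite /S row_rowsub HXY.
  have -> : S *m G *m U^T = 1%:M.
    by apply: trmx_inj; rewrite trmx_mul trmxK trmx1 HU.
  by rewrite det1 => /eqP; rewrite oner_eq0.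
- rewrite /wedge_shear.
  set S : 'M[R]_(q, N) := \matrix_i shear G D hc (XY i).1 (XY i).2.
  set U : 'M[R]_(q, N) := \matrix_j u j.
  have -> : \matrix_(i, j) bform G (shear G D hc (XY i).1 (XY i).2) (u j)
      = S *m G *m U^T.
    rewrite -bform_mx; apply/matrixP => i j; by rewrite [LHS]mxE [RHS]mxE !rowK.
  apply/eqP; apply: contraTT Hdq => Hdet; rewrite -leqNgt.
  have Hu : S *m G *m U^T \in unitmx by rewrite unitmxE unitfE.
  rewrite -(mxrank_unit Hu); apply: leq_trans (mxrankM_maxl _ _) _.
  apply: leq_trans (mxrankM_maxl _ _) _.
  rewrite -(eqP HBfree); apply: mxrankS; apply/row_subP => i; rewrite rowK.
  by apply: HBspan; exists (XY i).1, (XY i).2.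
Qed.

End Point.

Theorem proposition3p4 (R : realType) (n k : nat) (S : Type) (p0 : S)
    (G : S -> 'M[R]_(n + k)) (dPhi : S -> 'M[R]_(n, n + k))
    (hc : S -> 'I_n -> 'I_n -> 'rV[R]_(n + k))
    (* semi-Riemannian ambient metric: symmetric and nondegenerate *)
    (HGsym : forall p, (G p)^T = G p)
    (HGnd : forall p, G p \in unitmx)
    (* g = Phi^* gbar is positive definite (Riemannian) *)
    (Hgpos : forall p (X : 'rV[R]_n), X != 0 -> 0 < gind (G p) (dPhi p) X X)
    (* h is symmetric and normal-valued *)
    (Hhsym : forall p i j, hc p i j = hc p j i)
    (Hhnor : forall p i j, is_normal (G p) (dPhi p) (hc p i j))
    (* dim Im h~_p is constant on S *)
    (Hconst : exists d, forall p, span_dim (shear_set (G p) (dPhi p) (hc p)) d)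
    (m : nat) (Hm : (m <= k)%N) :
  umb_dim G dPhi hc m <->
  (wedge_shear_zero G dPhi hc (k - m).+1 /\ ~ wedge_shear_zero G dPhi hc (k - m)).

Proof.
have [d Hd] := Hconst.
have Hp : forall p, [/\ (d <= k)%N,
    span_dim (umbilical (G p) (dPhi p) (hc p)) m <-> m = (k - d)%N &
    forall q, (forall XY u, wedge_shear (G p) (dPhi p) (hc p) (q:=q) XY u = 0)
      <-> (d < q)%N].
  move=> p; have [B [Hf Hr Hs]] := Hd p; split.
  - exact: (d_le_k (HGsym p) (Hgpos p) (Hhnor p) Hf Hr).
  - exact: (umb_span (HGsym p) (HGnd p) (Hgpos p) (Hhnor p) Hf Hr Hs).
  - by move=> q; exact: (wedge_iff (HGnd p) Hf Hr Hs).
case: (Hp p0) => dk Hu0 Hw0.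
rewrite /umb_dim /wedge_shear_zero; split.
- move=> H; have e := (proj1 Hu0) (H p0); split.
  + by move=> p; case: (Hp p) => _ _ Hw; apply/Hw; lia.
  + by move=> Hz; have := Hz p0; move/Hw0; lia.
- move=> [Hz Hnz] p; case: (Hp p) => _ Hu _; apply/Hu.
  have h1 : (d < (k - m).+1)%N by apply/Hw0; exact: Hz p0.
  have h2 : ~ (d < k - m)%N.
    by move=> h; apply: Hnz => p'; case: (Hp p') => _ _ Hw; apply/Hw.
  lia.
Qed.
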